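(* $\mathrm{DCFL}\not\subseteq \mathrm{REG}/n$. Equivalently, $\mathrm{REG}/n\neq\mathrm{DCFL}/n$.
   Context: $\mathrm{REG}$ is the family of regular languages and $\mathrm{DCFL}$ the family of deterministic context-free languages. An advice function is a map $h:\mathbb{N}\to\Gamma^*$, for some alphabet $\Gamma$, with $|h(n)|=n$ for all $n$. For strings $x=x_1\cdots x_n$ and $w=\sigma_1\cdots\sigma_n$ of the same length, $\begin{bmatrix}x\\ w\end{bmatrix}$ denotes the string $\begin{bmatrix}x_1\\ \sigma_1\end{bmatrix}\cdots\begin{bmatrix}x_n\\ \sigma_n\end{bmatrix}$ over the product alphabet of pairs of symbols. For a family $\mathcal{C}$ of languages, $\mathcal{C}/n$ is the family of all languages $L$ over an alphabet $\Sigma$ for which there exist an advice function $h$ and a language $L'\in\mathcal{C}$ such that for all $x\in\Sigma^*$: $x\in L$ iff $\begin{bmatrix}x\\ h(|x|)\end{bmatrix}\in L'$. *)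

(* Defs.v *)
From mathcomp Require Import all_boot.
From Stdlib Require Import Relations.Relation_Operators.


Definition lang (Sigma : finType) := seq Sigma -> Prop.

Definition lang_family := forall Sigma : finType, lang Sigma -> Prop.

Record DFA (Sigma : finType) := {
  dfa_state : finType;
  dfa_start : dfa_state;
  dfa_delta : dfa_state -> Sigma -> dfa_state;
  dfa_final : pred dfa_state
}.
Arguments dfa_state {Sigma} _.
Arguments dfa_start {Sigma} _.
Arguments dfa_delta {Sigma} _ _ _.
Arguments dfa_final {Sigma} _ _.

Definition dfa_accepts {Sigma : finType} (A : DFA Sigma) (w : seq Sigma) : bool :=
  dfa_final A (foldl (dfa_delta A) (dfa_start A) w).

Definition REG : lang_family :=
  fun Sigma L => exists A : DFA Sigma, forall w, L w <-> dfa_accepts A w.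

Record DPDA (Sigma : finType) := {
  pda_state : finType;
  pda_stack : finType;
  pda_start : pda_state;
  pda_bottom : pda_stack;
  pda_final : pred pda_state;
  (* delta q (Some a) Z / delta q None Z : at most one move (determinism in
     the choice of move is built into the option type) *)
  pda_delta : pda_state -> option Sigma -> pda_stack ->
              option (pda_state * seq pda_stack);
  pda_det : forall q Z, pda_delta q None Z <> None ->
              forall a, pda_delta q (Some a) Z = None
}.
Arguments pda_state {Sigma} _.
Arguments pda_stack {Sigma} _.
Arguments pda_start {Sigma} _.
Arguments pda_bottom {Sigma} _.
Arguments pda_final {Sigma} _ _.
Arguments pda_delta {Sigma} _ _ _ _.
Arguments pda_det {Sigma} _ _ _ _ _.

Section DPDASem.
Context {Sigma : finType} (M : DPDA Sigma).

(* configuration: (state, remaining input, stack with top at the head) *)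
Definition pda_config := (pda_state M * seq Sigma * seq (pda_stack M))%type.

Inductive pda_step : pda_config -> pda_config -> Prop :=
| step_read q a w Z gam p alpha :
    pda_delta M q (Some a) Z = Some (p, alpha) ->
    pda_step (q, a :: w, Z :: gam) (p, w, alpha ++ gam)
| step_eps q w Z gam p alpha :
    pda_delta M q None Z = Some (p, alpha) ->
    pda_step (q, w, Z :: gam) (p, w, alpha ++ gam).

Definition pda_reach := @clos_refl_trans pda_config pda_step.

Definition dpda_accepts (w : seq Sigma) : Prop :=
  exists (q : pda_state M) (gam : seq (pda_stack M)),
    pda_reach (pda_start M, w, [:: pda_bottom M]) (q, [::], gam) /\ pda_final M q.
End DPDASem.

Definition DCFL : lang_family :=
  fun Sigma L => exists M : DPDA Sigma, forall w, L w <-> dpda_accepts M w.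

(* [x ; w] over the product alphabet: zip of two equal-length words. *)
Definition with_advice (C : lang_family) : lang_family :=
  fun Sigma L =>
    exists (Gamma : finType) (h : nat -> seq Gamma) (L' : lang (prod Sigma Gamma)),
      (forall n, size (h n) = n) /\ C _ L' /\
      forall x : seq Sigma, L x <-> L' (zip x (h (size x))).

(* Main.v *)
Require Import Defs.
From mathcomp Require Import all_boot.
From Stdlib Require Import Relations.Relation_Operators Relations.Operators_Properties Setoid.

Definition Q := (bool * bool)%type.
Definition Zs := option bool.

Definition mdelta (q : Q) (oa : option bool) (Z : Zs) : option (Q * seq Zs) :=
  match oa with
  | None => None
  | Some a =>
    match q, a with
    | (false,false), true => Some ((false,false), [:: Z])
    | (false,false), false => Some ((true,false), [:: Some true; Z])
    | (true,false), false => Some ((true,false), [:: Some false; Z])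
    | (true,false), true =>
        match Z with Some false => Some ((false,true), [::])
                   | Some true => Some ((true,true), [::]) | None => None end
    | (false,true), true =>
        match Z with Some false => Some ((false,true), [::])
                   | Some true => Some ((true,true), [::]) | None => None end
    | (false,true), false => None
    | (true,true), false => Some ((true,true), [:: Z])
    | (true,true), true => None
    end
  end.

Arguments mdelta : simpl never.

Lemma mdet : forall q Z, mdelta q None Z <> None ->
              forall a, mdelta q (Some a) Z = None.
Proof. by move=> q Z H; case: H. Qed.

Definition M : DPDA bool :=
  {| pda_state := (bool * bool)%type; pda_stack := (option bool);
     pda_start := (false,false); pda_bottom := None;
     pda_final := fun q => q == (true,true);
     pda_delta := mdelta; pda_det := mdet |}.

Definition step1 (c : option (Q * seq Zs)) (a : bool) : option (Q * seq Zs) :=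
  match c with
  | Some (q, Z :: gam) =>
      match mdelta q (Some a) Z with
      | Some (p, alpha) => Some (p, alpha ++ gam)
      | None => None end
  | _ => None end.

Definition runf c w := foldl step1 c w.

Lemma foldl_None w : foldl step1 None w = None.
Proof. by elim: w. Qed.

Lemma reach_run (c c' : pda_config M) : pda_reach M c c' ->
  exists u, c.1.2 = u ++ c'.1.2 /\ runf (Some (c.1.1, c.2)) u = Some (c'.1.1, c'.2).
Proof.
move=> H; apply clos_rt_rt1n in H; elim: H => [[[q w] st]|x y z Hs _ [u [H1 H2]]].
  by exists [::].
case: Hs H1 H2 => [q a w Z gam p alpha Hd|q w Z gam p alpha Hd] /= H1 H2.
  exists (a :: u); rewrite H1; split=> //=.
  by rewrite /runf /=; move: Hd; rewrite /= => ->.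
by [].
Qed.

Lemma run_reach u w q st q' st' :
  runf (Some (q, st)) u = Some (q', st') -> pda_reach M (q, u ++ w, st) (q', w, st').
Proof.
elim: u q st => [|a u IH] q st /=.
  by case=> -> ->; apply: rt_refl.
rewrite /runf /=; case: st => [|Z gam]; first by rewrite foldl_None.
case Hd: (mdelta q (Some a) Z) => [[p alpha]|]; last by rewrite foldl_None.
move=> /IH H; apply: rt_trans H; apply: rt_step; exact: step_read.
Qed.

Lemma acc_run w : dpda_accepts M w <->
  exists q gam, runf (Some ((false,false), [:: None])) w = Some (q, gam) /\ q = (true,true).
Proof.
split.
  move=> [q [gam [/reach_run [u [/= H1 H2]] Hf]]].
  exists q, gam; rewrite cats0 in H1; rewrite H1 H2; split=> //; exact/eqP.
move=> [q [gam [H Hq]]]; subst q; exists (true,true), gam; split=> //.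
by have := run_reach _ [::] _ _ _ _ H; rewrite cats0.
Qed.

Arguments runf : simpl never.

Lemma runf_cat c u v : runf c (u ++ v) = runf (runf c u) v.
Proof. exact: foldl_cat. Qed.

Lemma runf_cons c a u : runf c (a :: u) = runf (step1 c a) u.
Proof. by rewrite /runf. Qed.

Lemma runf_nil c : runf c [::] = c.
Proof. by rewrite /runf. Qed.

Lemma runf_None w : runf None w = None.
Proof. exact: foldl_None. Qed.

Lemma run_ones0 k Z gam :
  runf (Some ((false,false), Z :: gam)) (nseq k true) = Some ((false,false), Z :: gam).
Proof. by elim: k => [|k IH] /=; rewrite ?runf_nil // runf_cons /step1 /mdelta /=. Qed.

Lemma nseq_shift {T} k (x : T) s : nseq k x ++ x :: s = x :: nseq k x ++ s.
Proof. by elim: k => //= k ->. Qed.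

Lemma run_push k Z gam :
  runf (Some ((true,false), Z :: gam)) (nseq k false)
  = Some ((true,false), nseq k (Some false) ++ Z :: gam).
Proof.
elim: k Z gam => [|k IH] Z gam /=; first by rewrite runf_nil.
rewrite runf_cons /step1 /mdelta /= IH.
by rewrite nseq_shift.
Qed.

Lemma run_pop j k q r : (q == (true,false)) || (q == (false,true)) ->
  runf (Some (q, nseq (j.+1 + k) (Some false) ++ r)) (nseq j.+1 true)
  = Some ((false,true), nseq k (Some false) ++ r).
Proof.
elim: j q => [|j IH] q Hq.
  by rewrite add1n /= runf_cons /step1 runf_nil; case/orP: Hq => /eqP ->; rewrite /mdelta.
rewrite addSn /= runf_cons /step1.
have -> : mdelta q (Some true) (Some false) = Some ((false,true), [::]).
  by case/orP: Hq => /eqP ->.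
exact: IH.
Qed.

Lemma run_popall k q r : (q == (true,false)) || (q == (false,true)) ->
  runf (Some (q, nseq k (Some false) ++ Some true :: r)) (nseq k.+1 true)
  = Some ((true,true), r).
Proof.
case: k => [|k] Hq.
  by rewrite /= runf_cons /step1 runf_nil; case/orP: Hq => /eqP ->.
have -> : nseq k.+2 true = nseq k.+1 true ++ [:: true] by elim: k => //= k ->.
rewrite runf_cat -{1}(addn0 k.+1) run_pop // runf_cons /step1 runf_nil.
Qed.

Lemma run_zeros3 k Z gam :
  runf (Some ((true,true), Z :: gam)) (nseq k false) = Some ((true,true), Z :: gam).
Proof. by elim: k => [|k IH] /=; rewrite ?runf_nil // runf_cons /step1 /mdelta /=. Qed.

Lemma run_pre a k :
  runf (Some ((false,false), [:: None])) (nseq a true ++ nseq k.+1 false)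
  = Some ((true,false), nseq k (Some false) ++ [:: Some true; None]).
Proof.
rewrite runf_cat run_ones0 /= runf_cons /step1 /mdelta /=.
by rewrite -/mdelta run_push.
Qed.

Definition word m i j :=
  (nseq (m - i) true ++ nseq i false) ++ (nseq j true ++ nseq (m - j) false).

Lemma word_acc m k : dpda_accepts M (word m k.+1 k.+1).
Proof.
apply/acc_run; exists (true,true), [:: None]; split=> //.
rewrite /word runf_cat run_pre runf_cat run_popall //.
by rewrite run_zeros3.
Qed.

Lemma word_rej m i j : 0 < i <= m -> 0 < j <= m -> i != j -> ~ dpda_accepts M (word m i j).
Proof.
move=> /andP[i0 im] /andP[j0 jm] ij /acc_run [q [gam [H _]]].
move: H; case: i i0 im ij => // k _ km ij.
rewrite /word runf_cat run_pre.
case: (ltngtP j k.+1) ij => // [jk|kj] _.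
- case: j j0 jm jk => // j _ jm jk.
  have [d ->] : exists d, k = j.+1 + d by exists (k - j.+1); rewrite subnKC.
  rewrite runf_cat run_pop //.
  have -> : m - j.+1 = (m - j.+1).-1.+1 by rewrite prednK // subn_gt0 (leq_trans jk).
  by rewrite runf_cons; case: d => [|d] /=; rewrite /step1 /mdelta /= runf_None.
- have -> : nseq j true = nseq k.+1 true ++ true :: nseq (j - k.+2) true.
    by rewrite nseq_shift -[true :: _]/(nseq k.+2 true ++ _) -nseqD subnKC.
  rewrite -catA runf_cat run_popall // runf_cons /step1 /mdelta /=.
  by rewrite runf_None.
Qed.

Theorem proposition3p6 :
  ~ (forall (Sigma : finType) (L : lang Sigma),
       DCFL Sigma L -> with_advice REG Sigma L).
Proof.
move=> Hall.
have hD : DCFL bool (dpda_accepts M) by exists M.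
have := Hall _ _ hD.
move=> [Gamma [h [L' [hs [[A HA] HL]]]]].
set m := #|dfa_state A|.+1.
set H := h (m + m).
have sH : size H = m + m by rewrite /H hs.
have szw : forall i j, i <= m -> j <= m -> size (word m i j) = m + m.
  move=> i j im jm; by rewrite /word !size_cat !size_nseq subnK // subnKC.
pose f (i : 'I_m) := foldl (dfa_delta A) (dfa_start A)
   (zip (nseq (m - i.+1) true ++ nseq i.+1 false) (take m H)).
have key : forall i j : 'I_m, dpda_accepts M (word m i.+1 j.+1) <->
   dfa_final A (foldl (dfa_delta A) (f i) (zip (nseq j.+1 true ++ nseq (m - j.+1) false) (drop m H))).
  move=> i0 j0; rewrite (HL _) szw //.
  rewrite -/H (HA _) /dfa_accepts /word -{1}(cat_take_drop m H) zip_cat ?foldl_cat //.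
  by rewrite size_cat !size_nseq subnK // size_takel // sH leq_addr.
case: (boolP (injectiveb f)) => [/injectiveP inj | ].
  by have := @leq_card _ _ f inj; rewrite card_ord ltnn.
move/injectivePn => [i [j ij fij]].
apply: (@word_rej m j.+1 i.+1) => //.
- by rewrite ltn_ord.
- by rewrite ltn_ord.
- by rewrite eqSS eq_sym.
apply/key; rewrite -fij; apply/key; exact: word_acc.
Qed.
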